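(* Let $A=(a_{ij})_{1\le i,j\le n}$ be a complex Nekrasov matrix. Then there exist real numbers $\epsilon_1,\dots,\epsilon_n$ satisfying $$\epsilon_1>0,\qquad 0<\epsilon_i\le |a_{ii}|-h_i(A)\ \text{ and }\ \epsilon_i>\sum_{j=1}^{i-1}\frac{|a_{ij}|\,\epsilon_j}{|a_{jj}|}\quad\text{for } i=2,\dots,n,$$ and for any such numbers the diagonal matrix $$S=\mathrm{diag}\left(\frac{h_1(A)+\epsilon_1}{|a_{11}|},\dots,\frac{h_n(A)+\epsilon_n}{|a_{nn}|}\right)$$ has positive diagonal entries and $AS$ is strictly diagonally dominant by rows.
   Context: For a complex $n\times n$ matrix $A=(a_{ij})$ with $a_{ii}\ne 0$ for all $i$, define recursively $h_1(A):=\sum_{j\ne 1}|a_{1j}|$ and $h_i(A):=\sum_{j=1}^{i-1}|a_{ij}|\frac{h_j(A)}{|a_{jj}|}+\sum_{j=i+1}^{n}|a_{ij}|$ for $i=2,\dots,n$. $A$ is a Nekrasov matrix if $|a_{ii}|>h_i(A)$ for all $i\in\{1,\dots,n\}$. A matrix $B=(b_{ij})$ is strictly diagonally dominant by rows (SDD) if $|b_{ii}|>\sum_{j\ne i}|b_{ij}|$ for all $i$. *)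

(* Defs.v *)
From HB Require Import structures.
From mathcomp Require Import all_boot all_order all_algebra.
From mathcomp Require Import complex.
Set Implicit Arguments. Unset Strict Implicit. Unset Printing Implicit Defensive.
Import Order.TTheory GRing.Theory Num.Theory.
Local Open Scope ring_scope.

(* Complex numbers are R[i] for R a real closed field (R = the reals is the
   intended instance).  Indices are 0-based: row i : 'I_n is row i+1 of the paper. *)

Definition cabs (R : rcfType) (z : R[i]) : R := Num.sqrt (@complex.Re R z ^+ 2 + @complex.Im R z ^+ 2).

Definition aent (R : rcfType) (n : nat) (A : 'M[R[i]]_n) (i : nat) (j : 'I_n) : R[i] :=
  if insub i is Some i' then A i' j else 0.

(* given the list s = [h_0; ...; h_{i-1}], the value h_i *)
Definition hnext (R : rcfType) (n : nat) (A : 'M[R[i]]_n) (s : seq R) (i : nat) : R :=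
  \sum_(j < n | (j < i)%N) cabs (aent A i j) * s`_j / cabs (A j j)
  + \sum_(j < n | (i < j)%N) cabs (aent A i j).

Fixpoint hs (R : rcfType) (n : nat) (A : 'M[R[i]]_n) (k : nat) : seq R :=
  match k with
  | 0 => [::]
  | k'.+1 => rcons (hs A k') (hnext A (hs A k') k')
  end.

Definition h (R : rcfType) (n : nat) (A : 'M[R[i]]_n) (i : 'I_n) : R := (hs A n)`_i.

Definition nekrasov (R : rcfType) (n : nat) (A : 'M[R[i]]_n) : Prop :=
  (forall i : 'I_n, A i i != 0) /\ (forall i : 'I_n, h A i < cabs (A i i)).

Definition sdd (R : rcfType) (n : nat) (B : 'M[R[i]]_n) : Prop :=
  forall i : 'I_n, \sum_(j < n | j != i) cabs (B i j) < cabs (B i i).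

Definition admissible_eps (R : rcfType) (n : nat) (A : 'M[R[i]]_n) (eps : 'I_n -> R) : Prop :=
  forall i : 'I_n, 0 < eps i /\
    ((0 < i)%N ->
       eps i <= cabs (A i i) - h A i /\
       \sum_(j < n | (j < i)%N) cabs (A i j) * eps j / cabs (A j j) < eps i).

Definition sdiag (R : rcfType) (n : nat) (A : 'M[R[i]]_n) (eps : 'I_n -> R) (i : 'I_n) : R :=
  (h A i + eps i) / cabs (A i i).

Definition Smat (R : rcfType) (n : nat) (A : 'M[R[i]]_n) (eps : 'I_n -> R) : 'M[R[i]]_n :=
  diag_mx (\row_i ((sdiag A eps i)%:C)%C).

(* Main.v *)
Require Import Defs.
From HB Require Import structures.
From mathcomp Require Import all_boot all_order all_algebra.
From mathcomp Require Import complex.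
From mathcomp Require Import lra zify.
Import Order.TTheory GRing.Theory Num.Theory.
Local Open Scope ring_scope.

Section S.
Variable R : rcfType.

Lemma cabsE (z : R[i]) : cabs z = Normc.normc z.
Proof. by case: z. Qed.

Lemma cabs_ge0 (z : R[i]) : 0 <= cabs z.
Proof. exact: sqrtr_ge0. Qed.

Lemma cabsM (z w : R[i]) : cabs (z * w) = cabs z * cabs w.
Proof. by rewrite !cabsE Normc.normcM. Qed.

Lemma cabs_real (r : R) : 0 <= r -> cabs (r%:C)%C = r.
Proof. by move=> r0; rewrite /cabs /= expr0n /= addr0 sqrtr_sqr ger0_norm. Qed.


Lemma sum_sub (I : finType) (P : pred I) (F : I -> R) :
  (forall j, 0 <= F j) -> \sum_(j | P j) F j <= \sum_j F j.
Proof.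
move=> F0; rewrite [X in _ <= X](bigID P) /= lerDl; exact: sumr_ge0.
Qed.


Variable n : nat.
Variable A : 'M[R[i]]_n.

Lemma size_hs k : size (hs A k) = k.
Proof. by elim: k => //= k IH; rewrite size_rcons IH. Qed.

Lemma nth_hs k m j : (k <= m)%N -> (j < k)%N -> (hs A k)`_j = (hs A m)`_j.
Proof.
move=> km jk; elim: m km => [|m IH]; first by rewrite leqn0 => /eqP ->.
rewrite leq_eqVlt => /orP [/eqP -> //|]; rewrite ltnS => km.
by rewrite /= nth_rcons size_hs (leq_trans jk km) IH.
Qed.

Lemma hs_ge0 k j : 0 <= (hs A k)`_j.
Proof.
elim: k j => [|k IH] j; first by rewrite nth_nil.
rewrite /= nth_rcons size_hs; case: ltnP => _; first exact: IH.
case: eqP => _ //; rewrite /hnext addr_ge0 //; apply: sumr_ge0 => l _.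
  by rewrite divr_ge0 ?mulr_ge0 ?cabs_ge0.
exact: cabs_ge0.
Qed.

Lemma h_ge0 i : 0 <= h A i.
Proof. exact: hs_ge0. Qed.

Lemma aentE (i j : 'I_n) : aent A i j = A i j.
Proof. by rewrite /aent valK. Qed.

Lemma h_eq (i : 'I_n) : h A i =
  \sum_(j < n | (j < i)%N) cabs (A i j) * h A j / cabs (A j j)
  + \sum_(j < n | (i < j)%N) cabs (A i j).
Proof.
rewrite /h -(nth_hs i.+1 n i (ltn_ord i) (ltnSn i)) /= nth_rcons size_hs ltnn eqxx /hnext.
congr (_ + _); apply: eq_bigr => j ji; rewrite aentE //.
by rewrite (nth_hs i n j (ltnW (ltn_ord i)) ji).
Qed.

Hypothesis NA : nekrasov A.

Let d (i : 'I_n) := cabs (A i i).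

Lemma d_gt0 i : 0 < d i.
Proof. by apply: le_lt_trans (h_ge0 i) _; case: NA. Qed.

Lemma dh_gt0 i : 0 < d i - h A i.
Proof. by rewrite subr_gt0; case: NA. Qed.

Lemma part2 (eps : 'I_n -> R) : admissible_eps A eps ->
  (forall i : 'I_n, 0 < sdiag A eps i) /\ sdd (A *m Smat A eps).
Proof.
move=> Heps.
have spos i : 0 < sdiag A eps i.
  by rewrite /sdiag divr_gt0 ?d_gt0 // ltr_wpDl ?h_ge0 //; case: (Heps i).
split=> // i.
have s1 (j : 'I_n) : (0 < j)%N -> sdiag A eps j <= 1.
  move=> j0; rewrite /sdiag ler_pdivrMr ?d_gt0 // mul1r -lerBrDl.
  by case: (Heps j) => _ /(_ j0) [].
have Ent (j : 'I_n) : cabs ((A *m Smat A eps) i j) = cabs (A i j) * sdiag A eps j.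
  by rewrite /Smat mul_mx_diag !mxE cabsM cabs_real // ltW.
rewrite Ent /sdiag mulrCA mulfV ?mulr1; last by rewrite gt_eqF ?d_gt0.
under eq_bigr do rewrite Ent.
rewrite (bigID (fun j : 'I_n => (j < i)%N)) /=.
have -> : \sum_(j < n | (j != i) && (j < i)%N) cabs (A i j) * sdiag A eps j =
          \sum_(j < n | (j < i)%N) cabs (A i j) * sdiag A eps j.
  by apply: eq_bigl => j; case: ltnP => ji; rewrite ?andbT ?andbF // neq_ltn ji.
have -> : \sum_(j < n | (j != i) && ~~ (j < i)%N) cabs (A i j) * sdiag A eps j =
          \sum_(j < n | (i < j)%N) cabs (A i j) * sdiag A eps j.
  by apply: eq_bigl => j; rewrite -leqNgt ltn_neqAle eq_sym.
have H2 : \sum_(j < n | (i < j)%N) cabs (A i j) * sdiag A eps j <=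
          \sum_(j < n | (i < j)%N) cabs (A i j).
  apply: ler_sum => j ij; apply: ler_piMr; first exact: cabs_ge0.
  by apply: s1; apply: leq_ltn_trans ij.
have H1 : \sum_(j < n | (j < i)%N) cabs (A i j) * sdiag A eps j =
          \sum_(j < n | (j < i)%N) cabs (A i j) * h A j / cabs (A j j) +
          \sum_(j < n | (j < i)%N) cabs (A i j) * eps j / cabs (A j j).
  rewrite -big_split /=; apply: eq_bigr => j _.
  by rewrite /sdiag mulrA mulrDr mulrDl.
have HE : \sum_(j < n | (j < i)%N) cabs (A i j) * eps j / cabs (A j j) < eps i.
  case: (posnP i) => [i0|i0].
    rewrite big_pred0; first by case: (Heps i).
    by move=> j /=; rewrite i0.
  by case: (Heps i) => _ /(_ i0) [].
rewrite H1 (h_eq i).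
move: H2 HE; lra.
Qed.

Lemma part1 : exists eps : 'I_n -> R, admissible_eps A eps.
Proof.
pose K := \sum_(i < n) \sum_(j < n) cabs (A i j).
pose m := \big[Order.min/1]_(i < n) (d i - h A i).
have K0 : 0 <= K by apply: sumr_ge0 => i _; apply: sumr_ge0 => j _; exact: cabs_ge0.
have m0 : 0 < m by apply/bigmin_gtP; split => // i _; exact: dh_gt0.
have m1 : m <= 1 by exact: bigmin_le_id.
have mle i : m <= d i - h A i by exact: bigmin_le.
pose t := m / (K + 1).
have K1 : 0 < K + 1 by lra.
have t0 : 0 < t by rewrite divr_gt0.
have tm : t <= m by rewrite ler_pdivrMr //; nra.
have t1 : t <= 1 by lra.
have tK : t * K < m by rewrite /t mulrAC ltr_pdivrMr //; nra.
have rowK (i : 'I_n) : \sum_(j < n | (j < i)%N) cabs (A i j) <= K.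
  apply: le_trans (@sum_sub _ _ _ (fun j => cabs_ge0 _)) _.
  rewrite [X in _ <= X](bigD1 i) //= lerDl.
apply: sumr_ge0 => k _; apply: sumr_ge0 => j _.
  exact: cabs_ge0.
exists (fun i => (d i - h A i) * t ^+ (n - i)).
move=> i; split; first by rewrite mulr_gt0 ?dh_gt0 ?exprn_gt0.
move=> i0; split.
  by rewrite ler_piMr ?(ltW (dh_gt0 i)) // exprn_ile1 // ltW.
apply: le_lt_trans (_ : _ <= \sum_(j < n | (j < i)%N) cabs (A i j) * t ^+ (n - i).+1) _.
  apply: ler_sum => j ji; rewrite -mulrA; apply: ler_wpM2l; first exact: cabs_ge0.
  rewrite mulrAC; apply: le_trans (_ : _ <= t ^+ (n - j)) _.
    apply: ler_piMl; first by rewrite exprn_ge0 // ltW.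
    rewrite ler_pdivrMr ?d_gt0 // mul1r; have := h_ge0 j; rewrite /d; lra.
  apply: ler_wiXn2l; [exact: ltW | exact: t1 | ].
  have := ltn_ord i; move: ji; clear; lia.
rewrite -mulr_suml exprS mulrA.
apply: le_lt_trans (_ : _ <= K * t * t ^+ (n - i)) _.
  apply: ler_wpM2r; first by rewrite exprn_ge0 // ltW.
  by apply: ler_wpM2r; [exact: ltW | exact: rowK].
rewrite ltr_pM2r ?exprn_gt0 //.
apply: lt_le_trans (mle i); by rewrite mulrC.
Qed.
End S.

Theorem theorem2p1 (R : rcfType) (n : nat) (A : 'M[R[i]]_n) :
  nekrasov A ->
  (exists eps : 'I_n -> R, admissible_eps A eps) /\
  (forall eps : 'I_n -> R, admissible_eps A eps ->
     (forall i : 'I_n, 0 < sdiag A eps i) /\ sdd (A *m Smat A eps)).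
Proof. move=> NA; split; [exact: part1 | exact: part2]. Qed.
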